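(* There exists an absolute constant $C>0$ such that for every nonempty set $J$ of positive integers, $$\int_0^1\Big|\sum_{n\in J}\frac{1}{n^2}\cos nt\Big|\,{\rm d}t\ \ge\ C\Big(\sum_{n\in J}\frac1{n^2}\Big)^2.$$ *)

(* Defs.v *)
From Stdlib Require Import Reals ClassicalDescription.
Open Scope R_scope.

Definition Jcoef (J : nat -> Prop) (n : nat) : R :=
  if excluded_middle_informative (J n) then 1 / (INR n) ^ 2 else 0.

Definition Jterm (J : nat -> Prop) (t : R) (n : nat) : R :=
  Jcoef J n * cos (INR n * t).

(* Main.v *)
Require Import Defs.
From Stdlib Require Import Reals ClassicalDescription Lra Lia Arith.
Open Scope R_scope.

Lemma cv_le (u : nat -> R) (l K : R) :
  Un_cv u l -> (forall n, u n <= K) -> l <= K.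
Proof.
  intros H Hk. destruct (Rle_lt_dec l K) as [h|h]; auto.
  destruct (H (l - K)) as [N HN]; [lra|].
  specialize (HN N (le_n N)). unfold Rdist in HN.
  apply Rabs_def2 in HN. specialize (Hk N). lra.
Qed.

Lemma cv_ge (u : nat -> R) (l K : R) :
  Un_cv u l -> (forall n, K <= u n) -> K <= l.
Proof.
  intros H Hk. destruct (Rle_lt_dec K l) as [h|h]; auto.
  destruct (H (K - l)) as [N HN]; [lra|].
  specialize (HN N (le_n N)). unfold Rdist in HN.
  apply Rabs_def2 in HN. specialize (Hk N). lra.
Qed.

Lemma sin_abs_le (y : R) : 0 <= y -> sin y * sin y <= y * y.
Proof.
  intros hy. destruct (Rle_lt_dec y 0) as [h|h].
  - assert (y = 0) by lra. subst. rewrite sin_0. lra.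
  - pose proof (sin_lt_x y h).
    assert (-y <= sin y).
    { destruct (Rle_lt_dec 1 y).
      - pose proof (SIN_bound y). lra.
      - assert (0 <= sin y). { apply sin_ge_0; try lra. pose proof PI2_1; lra. }
        lra. }
    nra.
Qed.

Lemma one_minus_cos (x : R) : 0 <= x -> 1 - cos x <= x * x / 2.
Proof.
  intros hx. replace x with (2 * (x / 2)) at 1 by field.
  rewrite cos_2a_sin. pose proof (sin_abs_le (x/2)). nra.
Qed.


Lemma Jcoef_cases J (HJ : forall n, J n -> (0 < n)%nat) n :
  Jcoef J n = 0 \/ ((0 < n)%nat /\ Jcoef J n = 1 / (INR n) ^ 2).
Proof.
  unfold Jcoef. destruct (excluded_middle_informative (J n)) as [h|h]; auto.
Qed.

Definition dd J t n := Jcoef J n * (1 - cos (INR n * t)).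

Lemma dd_bounds J (HJ : forall n, J n -> (0 < n)%nat) t (ht : 0 <= t) n :
  0 <= dd J t n /\ dd J t n <= t * t / 2 /\
  ((2 <= n)%nat -> dd J t n <= 2 / (INR n - 1) - 2 / INR n).
Proof.
  unfold dd. pose proof (COS_bound (INR n * t)).
  destruct (Jcoef_cases J HJ n) as [h|[hn h]]; rewrite h.
  - split; [nra|]. split; [nra|]. intros h2.
    assert (1 < INR n) by (apply lt_1_INR; lia).
    assert (2 / (INR n - 1) - 2 / INR n = 2 / (INR n * (INR n - 1))) by (field; lra).
    rewrite H1. assert (0 < INR n * (INR n - 1)) by nra.
    assert (0 < 2 / (INR n * (INR n - 1))) by (apply Rdiv_lt_0_compat; lra). lra.
  - assert (0 < INR n) by (apply lt_0_INR; lia).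
    assert (0 < 1 / INR n ^ 2) by (apply Rdiv_lt_0_compat; try lra; apply pow_lt; lra).
    split; [nra|]. split.
    + pose proof (one_minus_cos (INR n * t) ltac:(nra)).
      apply Rle_trans with (1 / INR n ^ 2 * (INR n * t * (INR n * t) / 2)).
      * apply Rmult_le_compat_l; lra.
      * right. field. lra.
    + intros h2. assert (1 < INR n) by (apply lt_1_INR; lia).
      apply Rle_trans with (1 / INR n ^ 2 * 2); [apply Rmult_le_compat_l; lra|].
      assert (2 / (INR n - 1) - 2 / INR n = 2 / (INR n * (INR n - 1))) by (field; lra).
      rewrite H3. unfold Rdiv. rewrite Rmult_1_l, Rmult_comm.
      apply Rmult_le_compat_l; [lra|]. apply Rinv_le_contravar; [nra|]. simpl. nra.
Qed.

Lemma sum_dd_1 J (HJ : forall n, J n -> (0 < n)%nat) t (ht : 0 <= t) M :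
  sum_f_R0 (dd J t) M <= INR (S M) * (t * t / 2).
Proof.
  induction M as [|M IH].
  - simpl. destruct (dd_bounds J HJ t ht 0) as [_ [h _]]. lra.
  - simpl sum_f_R0. destruct (dd_bounds J HJ t ht (S M)) as [_ [h _]].
    rewrite (S_INR (S M)). lra.
Qed.

Lemma sum_dd_2 J (HJ : forall n, J n -> (0 < n)%nat) t (ht : 0 <= t) N (hN : (1 <= N)%nat) k :
  sum_f_R0 (dd J t) (N + k) <= sum_f_R0 (dd J t) N + 2 / INR N - 2 / INR (N + k).
Proof.
  induction k as [|k IH].
  - rewrite Nat.add_0_r. lra.
  - replace (N + S k)%nat with (S (N + k)) by lia. simpl sum_f_R0.
    destruct (dd_bounds J HJ t ht (S (N + k))) as [_ [_ h]].
    specialize (h ltac:(lia)). rewrite S_INR in h.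
    replace (INR (N + k) + 1 - 1) with (INR (N + k)) in h by ring.
    rewrite S_INR. lra.
Qed.

Lemma exN (t : R) : 0 < t -> t <= 1 ->
  exists N : nat, (1 <= N)%nat /\ INR N * t <= 1 /\ 1 < INR (S N) * t.
Proof.
  intros ht1 ht2.
  destruct (INR_unbounded (1 / t)) as [k Hk].
  assert (Hk' : INR k * t > 1).
  { apply Rmult_gt_compat_r with (r := t) in Hk; auto.
    replace (1 / t * t) with 1 in Hk by (field; lra). lra. }
  assert (forall k, INR k * t > 1 -> exists N, INR N * t <= 1 /\ 1 < INR (S N) * t) as G.
  { clear -ht1. intros k0. induction k0 as [|k IH]; intros h.
    - simpl in h. lra.
    - destruct (Rle_lt_dec (INR k * t) 1) as [h1|h1].
      + exists k. split; auto.
      + apply IH. lra. }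
  destruct (G k Hk') as [N [h1 h2]]. exists N. split; auto.
  destruct N; [|lia]. simpl in h2. lra.
Qed.

Lemma sum_dd_bound J (HJ : forall n, J n -> (0 < n)%nat) t (ht : 0 < t) (ht1 : t <= 1) M :
  sum_f_R0 (dd J t) M <= 5 * t.
Proof.
  destruct (exN t ht ht1) as [N [hN [h1 h2]]].
  rewrite S_INR in h2.
  assert (hA : INR (S N) * (t * t / 2) <= t). { rewrite S_INR. nra. }
  destruct (le_lt_dec M N) as [hm|hm].
  - pose proof (sum_dd_1 J HJ t (Rlt_le _ _ ht) M).
    assert (INR (S M) <= INR (S N)) by (apply le_INR; lia). nra.
  - replace M with (N + (M - N))%nat by lia.
    pose proof (sum_dd_2 J HJ t (Rlt_le _ _ ht) N hN (M - N)).
    pose proof (sum_dd_1 J HJ t (Rlt_le _ _ ht) N).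
    assert (1 <= INR N) by (apply (le_INR 1); lia).
    assert (0 < INR (N + (M - N))) by (apply lt_0_INR; lia).
    assert (0 < 2 / INR (N + (M - N))) by (apply Rdiv_lt_0_compat; lra).
    assert (2 / INR N <= 4 * t).
    { apply Rmult_le_reg_r with (INR N); [lra|]. unfold Rdiv.
      rewrite Rmult_assoc, Rinv_l by lra. nra. }
    lra.
Qed.

Lemma f_lower J (HJ : forall n, J n -> (0 < n)%nat) S f t :
  infinite_sum (Jcoef J) S -> infinite_sum (Jterm J t) (f t) ->
  0 < t -> t <= 1 -> S - 5 * t <= f t.
Proof.
  intros HS Hf ht ht1.
  assert (Un_cv (fun i => sum_f_R0 (Jcoef J) i - sum_f_R0 (Jterm J t) i) (S - f t))
    by (apply CV_minus; assumption).
  assert (S - f t <= 5 * t).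
  { apply (cv_le _ _ _ H). intros n. rewrite <- minus_sum.
    rewrite (sum_eq _ (dd J t)).
    - apply sum_dd_bound; auto.
    - intros i _. unfold dd, Jterm. ring. }
  lra.
Qed.

Lemma sum_coef_le J (HJ : forall n, J n -> (0 < n)%nat) M :
  sum_f_R0 (Jcoef J) (S M) <= 2 - 1 / INR (S M).
Proof.
  induction M as [|M IH].
  - simpl. destruct (Jcoef_cases J HJ 0) as [h|[h _]]; [|lia].
    destruct (Jcoef_cases J HJ 1) as [h1|[_ h1]]; rewrite h, h1; simpl; lra.
  - simpl sum_f_R0 in *. rewrite (S_INR (S M)).
    assert (1 <= INR (S M)) by (apply (le_INR 1); lia).
    assert (Jcoef J (S (S M)) <= 1 / INR (S M) - 1 / (INR (S M) + 1)).
    { destruct (Jcoef_cases J HJ (S (S M))) as [h|[_ h]]; rewrite h.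
      - assert (1 / INR (S M) - 1 / (INR (S M) + 1) = 1 / (INR (S M) * (INR (S M) + 1)))
          by (field; lra). rewrite H0.
        assert (0 < 1 / (INR (S M) * (INR (S M) + 1))) by (apply Rdiv_lt_0_compat; nra). lra.
      - rewrite S_INR.
        assert (1 / INR (S M) - 1 / (INR (S M) + 1) = 1 / (INR (S M) * (INR (S M) + 1)))
          by (field; lra). rewrite H0. unfold Rdiv. rewrite !Rmult_1_l.
        apply Rinv_le_contravar; [nra|]. set (x := INR (S M)) in *. simpl pow. nra. }
    lra.
Qed.

Lemma sum_coef_nonneg J (HJ : forall n, J n -> (0 < n)%nat) M :
  0 <= sum_f_R0 (Jcoef J) M.
Proof.
  induction M as [|M IH]; simpl.
  - destruct (Jcoef_cases J HJ 0) as [h|[h _]]; [lra|lia].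
  - destruct (Jcoef_cases J HJ (S M)) as [h|[hn h]]; rewrite h; [lra|].
    assert (0 < INR (S M)) by (apply lt_0_INR; lia).
    assert (0 < 1 / INR (S M) ^ 2) by (apply Rdiv_lt_0_compat; try lra; apply pow_lt; lra).
    lra.
Qed.

Theorem mainTheorem11 :
  exists C : R, 0 < C /\
    forall (J : nat -> Prop),
      (forall n, J n -> (0 < n)%nat) ->
      (exists n, J n) ->
      forall (S : R) (f : R -> R),
        infinite_sum (Jcoef J) S ->
        (forall t, infinite_sum (Jterm J t) (f t)) ->
        forall pr : Riemann_integrable (fun t => Rabs (f t)) 0 1,
          RiemannInt pr >= C * S ^ 2.
Proof.
  exists (1/20). split; [lra|].
  intros J HJ _ S f HS Hf pr.
  assert (S0 : 0 <= S) by (apply (cv_ge _ _ _ HS); apply sum_coef_nonneg; auto).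
  assert (S2 : S <= 2).
  { apply (cv_le _ _ _ HS). intros [|M].
    - pose proof (sum_coef_nonneg J HJ 0). simpl in *.
      destruct (Jcoef_cases J HJ 0) as [h|[h _]]; [lra|lia].
    - pose proof (sum_coef_le J HJ M).
      assert (0 < INR (Datatypes.S M)) by (apply lt_0_INR; lia).
      assert (0 < 1 / INR (Datatypes.S M)) by (apply Rdiv_lt_0_compat; lra). lra. }
  set (d := S / 10).
  assert (hd : 0 <= d <= 1) by (unfold d; lra).
  pose (pr1 := RiemannInt_P22 pr hd).
  pose (pr2 := RiemannInt_P23 pr hd).
  rewrite <- (RiemannInt_P26 pr1 pr2 pr).
  assert (I2 : 0 <= RiemannInt pr2).
  { pose proof (RiemannInt_P15 (RiemannInt_P14 d 1 0)) as E.
    rewrite <- (RiemannInt_P19 (RiemannInt_P14 d 1 0) pr2 ltac:(lra)).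
    - rewrite E. lra.
    - intros x _. unfold fct_cte. apply Rabs_pos. }
  assert (I1 : S / 2 * (d - 0) <= RiemannInt pr1).
  { pose proof (RiemannInt_P15 (RiemannInt_P14 0 d (S/2))) as E.
    rewrite <- E. apply RiemannInt_P19; [lra|].
    intros x hx. unfold fct_cte.
    pose proof (f_lower J HJ S f x HS (Hf x) ltac:(lra) ltac:(unfold d in *; lra)).
    unfold d in *. rewrite Rabs_right; lra. }
  unfold d in I1.
  assert (E : S / 2 * (S / 10 - 0) = 1/20 * S ^ 2) by field.
  rewrite E in I1. apply Rle_ge. apply Rle_trans with (RiemannInt pr1); [exact I1|]. rewrite <- (Rplus_0_r (RiemannInt pr1)) at 1. apply Rplus_le_compat_l. exact I2.
Qed.
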